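(* (1) Let $\widetilde A,A,P\in GL_2(\mathbb{C})$, $E\in\mathbb{C}^{2\times 2}$ and $c\in S^1$ satisfy $cP^{*}AP=\widetilde A+E$ and $\|E\|\le \dfrac{|\det\widetilde A|}{8\|\widetilde A\|+4}$. Put $\Delta=\arg\big(\tfrac{\det\widetilde A}{\det A}\big)$. Then there exist $k\in\mathbb{Z}$ and $g\in\mathbb{C}$ with $$c=(-1)^k e^{i\Delta/2}+g,\qquad c^{-1}=(-1)^k e^{-i\Delta/2}+\overline{g},\qquad |g|\le \frac{\|E\|(8\|\widetilde A\|+4)}{|\det\widetilde A|},$$ and $$|\det P|=\Big|\frac{\det\widetilde A}{\det A}\Big|^{1/2}+r,\qquad |r|\le\frac{\|E\|(4\|\widetilde A\|+2)}{\sqrt{|\det\widetilde A\,\det A|}}.$$ (2) Let $F\in\mathbb{C}^{2\times 2}$ and $\widetilde B,B,P\in GL_2(\mathbb{C})$ satisfy $P^{T}BP=\widetilde B+F$ and $\|F\|\le\dfrac{|\det\widetilde B|}{8\|\widetilde B\|+4}$. Then, for a suitable choice of the square root, $$\det P=\sqrt{\frac{\det\widetilde B}{\det B}}+r,\qquad |r|\le\frac{\|F\|(4\|\widetilde B\|+2)}{\sqrt{|\det\widetilde B\,\det B|}}.$$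
   Context: $S^1=\{c\in\mathbb{C}:|c|=1\}$; $P^*$ is the conjugate transpose and $P^T$ the transpose of $P$. For $X=[x_{jk}]\in\mathbb{C}^{2\times 2}$, $\|X\|=\max_{j,k}|x_{jk}|$ is the max norm. $\arg$ denotes an argument of a nonzero complex number. *)

(* Defs.v *)
From HB Require Import structures.
From mathcomp Require Import all_boot all_order all_algebra.
From mathcomp Require Import reals trigo.
From mathcomp Require Import complex.
Set Implicit Arguments. Unset Strict Implicit. Unset Printing Implicit Defensive.
Import Order.TTheory GRing.Theory Num.Theory.
Local Open Scope ring_scope.

Notation normc := (@ComplexField.Normc.normc _).


Definition maxnorm (R : realType) (X : 'M[R[i]]_2) : R :=
  \big[Num.max/0]_(j < 2) \big[Num.max/0]_(k < 2) normc (X j k).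

Definition ctrmx (R : realType) (P : 'M[R[i]]_2) : 'M[R[i]]_2 :=
  (map_mx (@conjc R) P)^T.

Definition expi (R : realType) (t : R) : R[i] := Complex (cos t) (sin t).

Definition is_arg (R : realType) (w : R[i]) (t : R) : Prop :=
  w = (normc w)%:C%C * expi t.

(* Main.v *)
Require Import Defs.
From HB Require Import structures.
From mathcomp Require Import all_boot all_order all_algebra.
From mathcomp Require Import reals trigo.
From mathcomp Require Import complex.
From mathcomp Require Import ring lra.
Import Order.TTheory GRing.Theory Num.Theory.
Local Open Scope ring_scope.

Section S.
Variable R : realType.
Implicit Types (x y z : R[i]) (M : 'M[R[i]]_2).
Local Notation Re := (@complex.Re R).
Local Notation Im := (@complex.Im R).

Lemma det2 M : \det M = M 0 0 * M 1 1 - M 0 1 * M 1 0.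
Proof.
rewrite (expand_det_row M 0) !big_ord_recl big_ord0 /cofactor !det_mx11 !mxE /=.
rewrite addr0 /= expr0 expr1 !mul1r mulN1r mulrN.
have l1 : forall i : 'I_1, lift (ord0 : 'I_2) i = 1 by move=> i; apply: val_inj; rewrite /= (ord1 i).
have l2 : forall i : 'I_1, lift (1 : 'I_2) i = 0 by move=> i; apply: val_inj; rewrite /= (ord1 i).
have l0 : (ord0 : 'I_2) = 0 by apply: val_inj.
by rewrite !l1 l2 !l0.
Qed.

Lemma ReM x y : Re (x * y) = Re x * Re y - Im x * Im y.
Proof. by case: x y => [a b] [c d]. Qed.
Lemma ImM x y : Im (x * y) = Re x * Im y + Im x * Re y.
Proof. by case: x y => [a b] [c d]. Qed.
Lemma ReD x y : Re (x + y) = Re x + Re y.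
Proof. by case: x y => [a b] [c d]. Qed.
Lemma ImD x y : Im (x + y) = Im x + Im y.
Proof. by case: x y => [a b] [c d]. Qed.
Lemma ReN x : Re (- x) = - Re x.
Proof. by case: x. Qed.
Lemma ImN x : Im (- x) = - Im x.
Proof. by case: x. Qed.
Lemma Re1 : Re (1 : R[i]) = 1. Proof. by []. Qed.
Lemma Im1 : Im (1 : R[i]) = 0. Proof. by []. Qed.
Lemma ReC (r : R) : Re (r%:C)%C = r. Proof. by []. Qed.
Lemma ImC (r : R) : Im (r%:C)%C = 0. Proof. by []. Qed.

Lemma normc_ge0 x : 0 <= normc x.
Proof. by case: x => a b /=; apply: sqrtr_ge0. Qed.
Lemma normc_sq x : normc x ^+ 2 = Re x ^+ 2 + Im x ^+ 2.
Proof. by case: x => a b /=; rewrite sqr_sqrtr // addr_ge0 // sqr_ge0. Qed.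
Lemma normc_conj x : normc x^*%C = normc x.
Proof. by case: x => a b /=; rewrite sqrrN. Qed.
Lemma mulJ x : conjc x * x = ((normc x ^+ 2)%:C)%C.
Proof.
apply/eqP; rewrite eq_complex normc_sq ReM ImM; case: x => a b /=.
apply/andP; split; apply/eqP; ring.
Qed.
Lemma normcN' x : normc (- x) = normc x.
Proof. by case: x => a b /=; rewrite !sqrrN. Qed.
Lemma normcB x y : normc (x - y) <= normc x + normc y.
Proof. by apply: le_trans (le_normcD _ _) _; rewrite normcN'. Qed.
Lemma normcM_le x y s t : normc x <= s -> normc y <= t -> normc (x * y) <= s * t.
Proof.
move=> hx hy; rewrite Normc.normcM; apply: ler_pM => //; exact: normc_ge0.
Qed.

Lemma maxnorm_ge M i j : normc (M i j) <= maxnorm M.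
Proof.
have ho : forall k : 'I_2, k = 0 \/ k = 1.
  by case=> [[|[|//]]] ?; [left|right]; apply: val_inj.
rewrite /maxnorm !big_ord_recl !big_ord0.
have -> : lift 0 (0 : 'I_1) = 1 :> 'I_2 by apply: val_inj.
by case: (ho i) => ->; case: (ho j) => ->; rewrite ?le_max ?lexx ?orbT.
Qed.

Lemma det_bound M : normc (\det M) <= 2 * maxnorm M ^+ 2.
Proof.
rewrite det2; apply: le_trans (normcB _ _) _.
have h := maxnorm_ge M.
by rewrite mulr2n mulrDl mul1r expr2 lerD // normcM_le.
Qed.

Lemma det_pert (X E : 'M[R[i]]_2) : normc (\det (X + E) - \det X) <=
   4 * maxnorm X * maxnorm E + 2 * maxnorm E ^+ 2.
Proof.
have hX := maxnorm_ge X; have hE := maxnorm_ge E.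
set t := maxnorm X; set e := maxnorm E.
rewrite !det2 !mxE.
have -> : (X 0 0 + E 0 0) * (X 1 1 + E 1 1) - (X 0 1 + E 0 1) * (X 1 0 + E 1 0) -
   (X 0 0 * X 1 1 - X 0 1 * X 1 0) =
   (X 0 0 * E 1 1 + E 0 0 * X 1 1 + E 0 0 * E 1 1) - (X 0 1 * E 1 0 + E 0 1 * X 1 0 + E 0 1 * E 1 0) by ring.
apply: le_trans (normcB _ _) _.
have h1 : normc (X 0 0 * E 1 1 + E 0 0 * X 1 1 + E 0 0 * E 1 1) <= t*e + e*t + e*e.
  apply: le_trans (le_normcD _ _) _; apply: lerD; last exact: normcM_le.
  apply: le_trans (le_normcD _ _) _; apply: lerD; exact: normcM_le.
have h2 : normc (X 0 1 * E 1 0 + E 0 1 * X 1 0 + E 0 1 * E 1 0) <= t*e + e*t + e*e.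
  apply: le_trans (le_normcD _ _) _; apply: lerD; last exact: normcM_le.
  apply: le_trans (le_normcD _ _) _; apply: lerD; exact: normcM_le.
apply: le_trans (lerD h1 h2) _.
rewrite le_eqVlt; apply/orP; left; apply/eqP; ring.
Qed.

Lemma numfacts (t e D d : R) : 0 < t -> 0 <= e -> 0 < D -> D <= 2*t^+2 ->
  e*(8*t+4) <= D -> d <= 4*t*e + 2*e^+2 ->
  [/\ d <= 9/16 * D, d <= 9/8 * (e*(4*t+2)) & 2*(e*(4*t+2)) <= D].
Proof.
move=> t0 e0 D0 Dt eD dd.
have et : e <= t/4 by nra.
have d2 : d <= 9/2 * t * e by nra.
split; nra.
Qed.

Lemma core (r S B D d K : R) : 0 <= r -> 0 <= S -> 0 < B -> 0 < D -> 0 <= d ->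
  0 <= K -> r*S*B <= d -> 2*D - d <= S^+2 * B -> d <= 9/16 * D ->
  d <= 9/8 * K -> 2*K <= D -> r^+2 * (D * B) <= K^+2.
Proof.
move=> r0 S0 B0 D0 d0 K0 h hS dD dK KD.
have pos : 0 <= r*S*B by rewrite !mulr_ge0 // ltW.
have h1 : (r*S*B)^+2 <= d^+2 by rewrite ler_sqr ?nnegrE.
have h2 : r^+2 * B * (2*D - d) <= d^+2.
  apply: le_trans h1. have : 0 <= r^+2 * B by nra. nra.
have dd : d^+2 <= 81/64 * K^+2 by nra.
have q1 : 0 <= 2*K^+2 - d^+2 by nra.
have q2 : 2*K*(2*K^+2 - d^+2) <= D * (2*K^+2 - d^+2) by apply: ler_wpM2r.
have q3 : 0 <= K * (4*K^+2 - 2*d^+2 - K*d).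
  apply: mulr_ge0 => //; nra.
have h3 : d^+2 * D <= K^+2 * (2*D - d) by nra.
have h4 : r^+2 * B * D * (2*D - d) <= K^+2 * (2*D - d) by nra.
have p : 0 < 2*D - d by lra.
have := h4; rewrite ler_pM2r //; nra.
Qed.

Lemma angle (l a b rho x y : R) : 0 < l -> a^+2 + b^+2 <= rho^+2 -> 0 <= rho -> rho < 1 ->
  x^+2 - y^+2 = l * (1 + a) -> 2*x*y = l * b -> x^+2 + y^+2 = 1 -> 0 <= x ->
  (x - 1)^+2 + y^+2 <= rho^+2.
Proof.
move=> l0 ab r0 r1 e1 e2 e3 x0.
have a1 : 0 < 1 + a by nra.
have hb : b^+2 * (1 - rho^+2) <= rho^+2 * (1+a)^+2.
  have s0 : 0 <= (1 + a - (1 - rho^+2))^+2 by apply: sqr_ge0.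
  have r2 : 0 <= 1 - rho^+2 by nra.
  have s1 : b^+2 * (1 - rho^+2) <= (rho^+2 - a^+2) * (1 - rho^+2).
    by apply: ler_wpM2r => //; lra.
  have s2 : rho^+2 * (1+a)^+2 - (rho^+2 - a^+2) * (1 - rho^+2) = (1 + a - (1 - rho^+2))^+2 by ring.
  lra.
have hu : (x^+2 - y^+2)^+2 + (2*x*y)^+2 = 1.
  have -> : (x^+2 - y^+2)^+2 + (2*x*y)^+2 = (x^+2 + y^+2)^+2 by ring.
  by rewrite e3 expr1n.
have h4 : (2*x*y)^+2 <= rho^+2.
  rewrite e2. move: hu; rewrite e1 e2 => hu.
  have : (l*b)^+2 * (1 - rho^+2) <= rho^+2 * (l*(1+a))^+2 by nra.
  nra.
have xx : 1/2 <= x^+2 by nra.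
have x1 : x <= 1 by nra.
nra.
Qed.

Lemma fin (r X K : R) : 0 <= r -> 0 <= K -> 0 < X -> r^+2 * X <= K^+2 -> r <= K / Num.sqrt X.
Proof.
move=> r0 K0 X0 h.
have sX : 0 < Num.sqrt X by rewrite sqrtr_gt0.
rewrite ler_pdivlMr //.
have p1 : 0 <= r * Num.sqrt X by rewrite mulr_ge0 // ltW.
rewrite -ler_sqr ?nnegrE //.
by rewrite exprMn sqr_sqrtr // ltW.
Qed.

Lemma maxnorm_ge0 M : 0 <= maxnorm M.
Proof. exact: le_trans (normc_ge0 _) (maxnorm_ge M 0 0). Qed.

Lemma unit_det {M : 'M[R[i]]_2} : M \in unitmx -> \det M != 0.
Proof. by rewrite unitmxE unitfE. Qed.

Lemma normc_gt0 x : x != 0 -> 0 < normc x.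
Proof.
move=> h; rewrite lt_def normc_ge0 andbT; apply/eqP => /Normc.eq0_normc.
by move/eqP: h.
Qed.

Lemma setup {X E : 'M[R[i]]_2} : \det X != 0 ->
  maxnorm E <= normc (\det X) / (8 * maxnorm X + 4) ->
  let D := normc (\det X) in let t := maxnorm X in let e := maxnorm E in
  let d := normc (\det (X + E) - \det X) in
  (0 < D /\ 0 <= d /\ 0 <= e * (4 * t + 2) /\
   d <= 9/16 * D /\ d <= 9/8 * (e*(4*t+2)) /\ 2*(e*(4*t+2)) <= D).
Proof.
move=> dX hE D t e d.
have D0 : 0 < D by exact: normc_gt0.
have t0 : 0 <= t by exact: maxnorm_ge0.
have e0 : 0 <= e by exact: maxnorm_ge0.
have Dt : D <= 2 * t^+2 by exact: det_bound.
have tp : 0 < t by nra.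
have eD : e * (8*t+4) <= D by rewrite -ler_pdivlMr //; lra.
have dd : d <= 4*t*e + 2*e^+2 by exact: det_pert.
have [h1 h2 h3] := @numfacts t e D d tp e0 D0 Dt eD dd.
split => //; split; [exact: normc_ge0 | split => //; nra].
Qed.

Lemma part2 (Bt B P F : 'M[R[i]]_2) :
      Bt \in unitmx -> B \in unitmx -> P \in unitmx ->
      P^T *m B *m P = Bt + F ->
      maxnorm F <= normc (\det Bt) / (8 * maxnorm Bt + 4) ->
      exists (s r : R[i]),
        s ^+ 2 = \det Bt / \det B /\
        \det P = s + r /\
        normc r <= maxnorm F * (4 * maxnorm Bt + 2)
                   / Num.sqrt (normc (\det Bt * \det B)).
Proof.
move=> uBt uB uP H hF.
have [D0 [d0 [K0 [dD [dK KD]]]]] := setup (unit_det uBt) hF.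
move: D0 d0 K0 dD dK KD.
set D := normc (\det Bt); set K := _ * (4 * _ + 2).
have b0 := unit_det uB.
set d := \det Bt; set b := \det B; set q := \det P.
set Dl := \det (Bt + F) - d.
move=> D0 d0 K0 dD dK KD.
have Hq : q * b * q = d + Dl.
  by rewrite /Dl addrC subrK -H !det_mulmx det_tr.
pose s0 := sqrtc (d / b).
have [s [hs2 hsg]] : exists s, s^+2 = d/b /\ 0 <= Re q * Re s + Im q * Im s.
  case: (lerP 0 (Re q * Re s0 + Im q * Im s0)) => h.
    by exists s0; rewrite sqr_sqrtc.
  exists (-s0); rewrite sqrrN sqr_sqrtc ReN ImN; split => //; lra.
exists s, (q - s); split; first done; split; first by rewrite addrC subrK.
have B0 : 0 < normc b by exact: normc_gt0.
rewrite Normc.normcM -/D.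
apply: fin; [exact: normc_ge0 | done | by rewrite mulr_gt0 |].
have e1 : (q - s) * (q + s) * b = Dl.
  have -> : (q - s) * (q + s) * b = q * b * q - s^+2 * b by ring.
  by rewrite Hq hs2 divfK // addrC addKr.
have e2 : normc (q * b * q) = normc q ^+ 2 * normc b.
  by rewrite !Normc.normcM; ring.
have e3 : normc (s ^+ 2 * b) = normc s ^+ 2 * normc b.
  by rewrite Normc.normcM [s ^+ 2]expr2 Normc.normcM expr2.
have hDl : D <= normc (d + Dl) + normc Dl.
  by have := normcB (d + Dl) Dl; rewrite addrK.
apply: (@core (normc (q-s)) (normc (q+s)) (normc b) D (normc Dl) K) => //.
- exact: normc_ge0.
- exact: normc_ge0.
- by rewrite -!Normc.normcM e1.
- have hS : normc q ^+ 2 + normc s ^+ 2 <= normc (q + s) ^+ 2.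
    rewrite !normc_sq ReD ImD; nra.
  have : D = normc s ^+ 2 * normc b by rewrite -e3 hs2 divfK.
  move: e2; rewrite Hq => e2 eD.
  have := ler_wpM2r (ltW B0) hS.
  nra.
Qed.

Lemma gb (u z : R[i]) (l rho : R) : 0 <= Re u -> normc u = 1 ->
  u ^+ 2 = l%:C%C * (1 + z) -> 0 < l -> normc z = rho -> rho < 1 ->
  normc (u - 1) <= rho.
Proof.
move=> x0 un eu l0 zr r1.
have r0 : 0 <= rho by rewrite -zr normc_ge0.
have e1 : Re u ^+ 2 - Im u ^+ 2 = l * (1 + Re z).
  have := congr1 Re eu; rewrite expr2 ReM ReM ReD ImD Re1 Im1 ReC ImC => ->; ring.
have e2 : 2 * Re u * Im u = l * Im z.
  have := congr1 Im eu; rewrite expr2 ImM ImM ReD ImD Re1 Im1 ReC ImC => h.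
  transitivity (Re u * Im u + Im u * Re u); first ring.
  rewrite h; ring.
have e3 : Re u ^+ 2 + Im u ^+ 2 = 1 by rewrite -normc_sq un expr1n.
have ab : Re z ^+ 2 + Im z ^+ 2 <= rho ^+ 2 by rewrite -normc_sq zr.
have := @angle l (Re z) (Im z) rho (Re u) (Im u) l0 ab r0 r1 e1 e2 e3 x0.
move=> h; rewrite -ler_sqr ?nnegrE ?normc_ge0 // normc_sq ReD ImD ReN ImN Re1 Im1.
by apply: le_trans h; rewrite le_eqVlt; apply/orP; left; apply/eqP; ring.
Qed.

Lemma normc1_sq x : normc x ^+ 2 = 1 -> normc x = 1.
Proof. by move=> h; apply/eqP; rewrite -sqrp_eq1 ?normc_ge0 // h. Qed.

Lemma part1 (At A P E : 'M[R[i]]_2) (c : R[i]) (Delta : R) :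
      At \in unitmx -> A \in unitmx -> P \in unitmx ->
      normc c = 1 ->
      c *: (ctrmx P *m A *m P) = At + E ->
      maxnorm E <= normc (\det At) / (8 * maxnorm At + 4) ->
      is_arg (\det At / \det A) Delta ->
      (exists (k : int) (g : R[i]),
          c = (-1) ^ k * expi (Delta / 2) + g /\
          c^-1 = (-1) ^ k * expi (- (Delta / 2)) + conjc g /\
          normc g <= maxnorm E * (8 * maxnorm At + 4) / normc (\det At)) /\
      (exists r : R,
          normc (\det P) = Num.sqrt (normc (\det At / \det A)) + r /\
          `|r| <= maxnorm E * (4 * maxnorm At + 2)
                  / Num.sqrt (normc (\det At * \det A))).
Proof.
move=> uAt uA uP hc H hE harg.
have [D0 [d0 [K0 [dD [dK KD]]]]] := setup (unit_det uAt) hE.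
move: D0 d0 K0 dD dK KD.
have a0 := unit_det uA; have dn0 := unit_det uAt; have q0 := unit_det uP.
set D := normc (\det At); set K := _ * (4 * _ + 2).
have -> : maxnorm E * (8 * maxnorm At + 4) = 2 * K by rewrite /K; ring.
set d := \det At; set a := \det A; set q := \det P.
set Dl := \det (At + E) - d.
move=> D0 d0 K0 dD dK KD.
have H1 : c ^+ 2 * (conjc q * a * q) = d + Dl.
  by rewrite /Dl addrC subrK -H detZ !det_mulmx /ctrmx det_tr det_map_mx.
set p := normc q.
have p0 : 0 < p by exact: normc_gt0.
have B0 : 0 < normc a by exact: normc_gt0.
have Hn : p ^+ 2 * normc a = normc (d + Dl).
  rewrite -H1 [c ^+ 2]expr2 !Normc.normcM normc_conj hc -/p; ring.
have hDl : D <= normc (d + Dl) + normc Dl.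
  by have := normcB (d + Dl) Dl; rewrite addrK.
have hDl2 : normc (d + Dl) <= D + normc Dl by apply: le_normcD.
set m := normc (d / a).
have hm : m * normc a = D by rewrite /m Normc.normcM Normc.normcV divfK // gt_eqF.
have m0 : 0 < m by rewrite /m normc_gt0 // mulf_neq0 // invr_eq0.
split; last first.
  exists (p - Num.sqrt m); split; first by rewrite addrC subrK.
  set s := Num.sqrt m.
  have s0 : 0 <= s by apply: sqrtr_ge0.
  have s2 : s ^+ 2 = m by rewrite sqr_sqrtr // ltW.
  rewrite Normc.normcM -/D.
  apply: fin; [exact: (@normr_ge0 R) | done | by rewrite mulr_gt0 |].
  apply: (@core `|p - s| (p + s) (normc a) D (normc Dl) K) => //.
  - by rewrite addr_ge0 // ltW.
  - have -> : `|p - s| * (p + s) * normc a = `|p ^+ 2 * normc a - s ^+ 2 * normc a|.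
      have -> : p ^+ 2 * normc a - s ^+ 2 * normc a = (p - s) * (p + s) * normc a by ring.
      by rewrite !normrM (ger0_norm (ltW B0)) (@ger0_norm _ (p + s)) // addr_ge0 // ltW.
    rewrite Hn s2 hm ler_norml; apply/andP; split; lra.
  - have : p ^+ 2 + s ^+ 2 <= (p + s) ^+ 2 by nra.
    move=> /(ler_wpM2r (ltW B0)); rewrite mulrDl Hn s2 hm; lra.
pose v := expi (Delta / 2).
have hv2 : v ^+ 2 = expi Delta.
  apply/eqP; rewrite eq_complex /v /expi expr2 ReM ImM /=.
  have hD : Delta = Delta / 2 + Delta / 2 by rewrite -splitr.
  rewrite [in cos Delta]hD [in sin Delta]hD cosD sinD.
  by apply/andP; split; apply/eqP; ring.
have hvn : normc v = 1.
  by apply: normc1_sq; rewrite normc_sq /v /expi /= cos2Dsin2.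
have hvv : conjc v * v = 1 by rewrite mulJ hvn expr1n.
have c0 : c != 0 by apply/eqP => c0; move: hc; rewrite c0 Normc.normc0 => /eqP; rewrite eq_sym oner_eq0.
have hcc : conjc c * c = 1 by rewrite mulJ hc expr1n.
have ci : c^-1 = conjc c by apply: (mulIf c0); rewrite mulVf // hcc.
have ev : expi (- (Delta / 2)) = conjc v by rewrite /v /expi cosN sinN.
pose w := c * conjc v.
have hwn : normc w = 1 by rewrite /w Normc.normcM normc_conj hc hvn mul1r.
have X0 : (p ^+ 2)%:C%C != 0 :> R[i].
  rewrite eq_complex /= eqxx andbT expf_eq0 /=.
  by rewrite gt_eqF.
have m0C : (m%:C)%C != 0 :> R[i].
  by rewrite eq_complex /= eqxx andbT gt_eqF.
have eV : v ^+ 2 * (m%:C)%C = d / a.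
  by rewrite hv2 mulrC [in RHS]harg.
have cv2 : conjc v ^+ 2 = (m%:C)%C * a / d.
  have hvv2 : conjc v ^+ 2 * v ^+ 2 = 1 by rewrite -exprMn hvv expr1n.
  transitivity (conjc v ^+ 2 * (v ^+ 2 * (m%:C)%C) * a / d).
    by rewrite eV; field; apply/andP; split.
  by rewrite mulrA hvv2 mul1r.
have c2 : c ^+ 2 = (d + Dl) / ((p ^+ 2)%:C%C * a).
  have : c ^+ 2 * ((p ^+ 2)%:C%C * a) = d + Dl by rewrite -H1 -mulJ; ring.
  by move=> <-; rewrite mulfK // mulf_neq0.
pose l := m / p ^+ 2.
have l0 : 0 < l by rewrite /l divr_gt0 // exprn_gt0.
have key : w ^+ 2 = (l%:C)%C * (1 + Dl / d).
  have pC : (p%:C)%C != 0 :> R[i] by rewrite eq_complex /= eqxx andbT gt_eqF.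
  have -> : ((m / p ^+ 2)%:C)%C = (m%:C)%C / ((p%:C)%C) ^+ 2 :> R[i].
    by rewrite fmorph_div rmorphXn.
  rewrite /w exprMn c2 cv2 rmorphXn /=.
  by field; rewrite pC a0 dn0.
have nz : normc (Dl / d) = normc Dl / D.
  by rewrite Normc.normcM Normc.normcV.
have r1 : normc (Dl / d) < 1.
  by rewrite nz ltr_pdivrMr // mul1r; lra.
have hrho : normc (Dl / d) <= 2 * K / D.
  by rewrite nz ler_pM2r ?invr_gt0 //; lra.
case: (lerP 0 (Re w)) => hw.
  have hg := @gb w (Dl / d) l (normc (Dl / d)) hw hwn key l0 erefl r1.
  exists 0, (c - v); split; first by rewrite expr0z mul1r addrC subrK.
  split; first by rewrite ci ev expr0z mul1r rmorphB /= addrC subrK.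
  have -> : c - v = (w - 1) * v by rewrite /w mulrBl -mulrA hvv mulr1 mul1r.
  by rewrite Normc.normcM hvn mulr1; apply: le_trans hg hrho.
have hw' : 0 <= Re (- w) by rewrite ReN; lra.
have hwn' : normc (- w) = 1 by rewrite normcN'.
have key' : (- w) ^+ 2 = (l%:C)%C * (1 + Dl / d) by rewrite sqrrN.
have hg := @gb (- w) (Dl / d) l (normc (Dl / d)) hw' hwn' key' l0 erefl r1.
exists 1, (c + v); split; first by rewrite expr1z -/v; ring.
split; first by rewrite ci ev expr1z rmorphD /=; ring.
have -> : c + v = - (- w - 1) * v.
  transitivity (c * (conjc v * v) + v); first by rewrite hvv mulr1.
  rewrite /w; ring.
by rewrite Normc.normcM normcN' hvn mulr1; apply: le_trans hg hrho.
Qed.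
End S.

Theorem lemma4p1 (R : realType) :
  (forall (At A P E : 'M[R[i]]_2) (c : R[i]) (Delta : R),
      At \in unitmx -> A \in unitmx -> P \in unitmx ->
      normc c = 1 ->
      c *: (ctrmx P *m A *m P) = At + E ->
      maxnorm E <= normc (\det At) / (8 * maxnorm At + 4) ->
      is_arg (\det At / \det A) Delta ->
      (exists (k : int) (g : R[i]),
          c = (-1) ^ k * expi (Delta / 2) + g /\
          c^-1 = (-1) ^ k * expi (- (Delta / 2)) + conjc g /\
          normc g <= maxnorm E * (8 * maxnorm At + 4) / normc (\det At)) /\
      (exists r : R,
          normc (\det P) = Num.sqrt (normc (\det At / \det A)) + r /\
          `|r| <= maxnorm E * (4 * maxnorm At + 2)
                  / Num.sqrt (normc (\det At * \det A)))) /\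
  (forall (Bt B P F : 'M[R[i]]_2),
      Bt \in unitmx -> B \in unitmx -> P \in unitmx ->
      P^T *m B *m P = Bt + F ->
      maxnorm F <= normc (\det Bt) / (8 * maxnorm Bt + 4) ->
      exists (s r : R[i]),
        s ^+ 2 = \det Bt / \det B /\
        \det P = s + r /\
        normc r <= maxnorm F * (4 * maxnorm Bt + 2)
                   / Num.sqrt (normc (\det Bt * \det B))).
Proof.
split; [exact: (@part1 R) | exact: (@part2 R)].
Qed.
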